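(* Let $m,n\ge0$. The element $t$ is invertible in the ring $U^{\pm}_{m,n}$.
   Context: $U^{\pm}_{m,n}$ is the commutative ring generated over $\mathbb Z$ by $u_1,u_2,\dots$, $v_1,v_2,\dots$ and $t$, with conventions $u_0=v_0=1$ and $u_i=v_i=0$ for $i<0$, subject to the relations $R_I(w)=0$ for all $I=(i_1,\dots,i_{m+1})\in\mathbb Z^{m+1}$, where $w_i=u_i-tv_{-i-m+n}$ ($i\in\mathbb Z$) and $R_I(w)=\det(w_{i_\alpha+\beta-1})_{1\le\alpha,\beta\le m+1}$. *)

(* Defs.v *)
From HB Require Import structures.
From mathcomp Require Import all_boot all_order all_algebra.
Set Implicit Arguments. Unset Strict Implicit. Unset Printing Implicit Defensive.
Import Order.TTheory GRing.Theory Num.Theory.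
Local Open Scope ring_scope.

(* The ring U^{\pm}_{m,n} is presented by generators u_1,u_2,..., v_1,v_2,...,
   t and relations R_I(w) = 0.  We encode statements about it through its
   universal property: a "model" is a commutative ring A together with
   elements u, v : nat -> A (the value at index 0 is ignored and replaced by
   the convention u_0 = v_0 = 1) and t : A satisfying all relations. *)

Definition ext (A : pzRingType) (x : nat -> A) (i : int) : A :=
  match i with
  | Posz 0 => 1
  | Posz k => x k
  | Negz _ => 0
  end.

Definition wseq (A : pzRingType) (m n : nat) (u v : nat -> A) (t : A)
    (i : int) : A :=
  ext u i - t * ext v (- i - m%:Z + n%:Z).

(* R_I(w) = det (w_{i_alpha + beta - 1})_{1 <= alpha, beta <= m+1};
   with 0-based indices a, b : 'I_(m+1) the entry is w_{I a + b}. *)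
Definition Rrel (A : comPzRingType) (m n : nat) (u v : nat -> A) (t : A)
    (I : 'I_m.+1 -> int) : A :=
  \det (\matrix_(a < m.+1, b < m.+1) @wseq A m n u v t (I a + (b : nat)%:Z)).

Definition Upm_model (A : comPzRingType) (m n : nat) (u v : nat -> A) (t : A)
    : Prop :=
  forall I : 'I_m.+1 -> int, @Rrel A m n u v t I = 0.

(* Main.v *)
Require Import Defs.
From HB Require Import structures.
From mathcomp Require Import all_boot all_order all_algebra.
From mathcomp Require Import perm ring.
Import GRing.Theory.
Local Open Scope ring_scope.

Lemma perm_has_lt (N : nat) (s : 'S_N) : s != 1%g -> exists i : 'I_N, (s i < i)%N.
Proof.
move=> s1.
case: (boolP [exists i : 'I_N, (s i < i)%N]) => [/existsP [i Hi]|H]; first by exists i.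
exfalso; move/negP: s1; apply; apply/eqP/perm.permP => i; rewrite perm1.
have Hle : forall j : 'I_N, (j <= s j)%N.
  by move=> j; move/existsPn: H => /(_ j); rewrite -leqNgt.
have Hsum : (\sum_(j : 'I_N) nat_of_ord (s j) = \sum_(j : 'I_N) nat_of_ord j)%N.
  by rewrite [RHS](reindex_inj (@perm_inj _ s)).
have := @leqif_sum _ xpredT (fun j : 'I_N => (nat_of_ord j == s j)) (fun j : 'I_N => nat_of_ord j) (fun j => nat_of_ord (s j)).
move=> /(_ (fun j _ => leqif_eq (Hle j))) [_].
rewrite Hsum eqxx => /esym/forallP/(_ i) /=.
by move/eqP => Hi; apply: val_inj.
Qed.

Section Div.
Variable A : comPzRingType.
Variable t : A.
Definition Dv (x : A) := exists y, x = t * y.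
Lemma Dv0 : Dv 0. Proof. by exists 0; rewrite mulr0. Qed.
Lemma DvD x y : Dv x -> Dv y -> Dv (x + y).
Proof. by move=> [a ->] [b ->]; exists (a + b); rewrite mulrDr. Qed.
Lemma DvMl x y : Dv y -> Dv (x * y).
Proof. by move=> [b ->]; exists (x * b); rewrite mulrCA. Qed.
Lemma DvMr x y : Dv x -> Dv (x * y).
Proof. by move=> [b ->]; exists (b * y); rewrite mulrA. Qed.
Lemma Dv_sum (I : finType) (P : pred I) F : (forall i, P i -> Dv (F i)) -> Dv (\sum_(i | P i) F i).
Proof. by move=> H; apply: big_ind => //; [exact: Dv0| exact: DvD]. Qed.
Lemma Dv_pow c j : Dv ((1 - t * c) ^+ j - 1).
Proof.
elim: j => [|j [y Hy]]; first by rewrite expr0 subrr; exact: Dv0.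
exists ((1 - t * c) * y - c).
have E : (1 - t * c) ^+ j = t * y + 1 by rewrite -Hy subrK.
rewrite exprS E; ring.
Qed.
End Div.

Theorem mainTheorem15 (m n : nat) (A : comPzRingType) (u v : nat -> A) (t : A) :
  @Upm_model A m n u v t -> exists s : A, t * s = 1.
Proof.
move=> H.
pose I := fun a : 'I_m.+1 => - ((a : nat)%:Z).
have := H I; rewrite /Rrel.
set M := \matrix_(_ < _, _ < _) _.
move=> Hdet.
suff [y Hy] : @Dv A t (\det M - 1).
  by exists (- y); rewrite mulrN -Hy Hdet sub0r opprK.
rewrite /determinant (bigD1 (1%g : 'S_m.+1)) //=.
have -> : forall a b : A, a + b - 1 = (a - 1) + b by move=> a b; ring.
apply: DvD.
  rewrite odd_perm1 expr0 mul1r.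
  set c := ext v (- 0 - m%:Z + n%:Z).
  have -> : \prod_i M i ((1%g : 'S_m.+1) i) = \prod_(i < m.+1) (1 - t * c).
    apply: eq_bigr => i _; rewrite perm1 /M mxE /I addrC subrr /wseq /c.
    by [].
  by rewrite prodr_const card_ord; exact: Dv_pow.
apply: Dv_sum => s Hs.
apply: DvMl.
have [i Hi] := @perm_has_lt _ s Hs.
rewrite (bigD1 i) //=; apply: DvMr.
rewrite /M mxE /wseq.
have [k ->] : exists k, I i + (s i : nat)%:Z = Negz k.
  exists ((i : nat) - (s i : nat)).-1%N.
  rewrite /I NegzE.
  rewrite addrC -opprB; congr (- _).
  rewrite prednK ?subn_gt0 // -subzn; last exact: ltnW.
  by [].
rewrite /= sub0r.
by exists (- ext v (- Negz k - m%:Z + n%:Z)); rewrite mulrN.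
Qed.
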